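(* Under Algorithm 2(b) below (drop when seen, with field size $q\ge n$), at the end of every slot the sender's physical queue size is at most the sum over the $n$ receivers of their virtual queue sizes (the degrees-of-freedom backlogs between the sender and each receiver). Consequently, if $\lambda<\mu$, the expected size of the physical queue in steady state is $O\left(\frac{1}{1-\rho}\right)$ as $\rho=\lambda/\mu\to1^-$ (with $\lambda,\mu\in(0,1)$ and one of them held fixed).
   Context: Model: a sender broadcasts a stream of packets to $n$ receivers. Packets are fixed-length vectors over $\mathbb{F}_q$; the $k$-th arriving packet is $\mathbf{p}_k$. Time is slotted; in each slot one packet arrives with probability $\lambda$ independently (just after the slot begins). The sender transmits at most one linear combination of packets in its queue per slot (coefficients in the header). Each receiver independently receives it with probability $\mu$, else a detectable erasure; independent across receivers and slots. Perfect feedback reaches the sender before the end of the slot; drops happen just before the end of the slot; queue sizes are measured at the end of the slot; $\rho=\lambda/\mu$. A node's knowledge space is the space of coefficient vectors (w.r.t. arrived packets) of linear combinations it can compute; the sender's is $\mathbb{F}_q^{A}$ after $A$ arrivals. The virtual queue size of receiver $j$ is $\dim$(sender's knowledge space) $-\dim$(receiver $j$'s knowledge space). A node has seen $\mathbf{p}_k$ if it can compute $\mathbf{p}_k+\mathbf{q}$ with $\mathbf{q}$ a linear combination of packets of index greater than $k$. If receiver $r$ has seen $\mathbf{p}_k$, its witness $\mathbf{W}_r(\mathbf{p}_k)$ is the unique linear combination it knows of the form $\mathbf{p}_k+\mathbf{q}$ where $\mathbf{q}$ involves only packets of index greater than $k$ that $r$ has not seen. A receiver's next unseen packet is the lowest-index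 packet it has not seen. Algorithm 2(b): Queue rule: at the end of each slot, drop from the queue every packet that all $n$ receivers have seen. Coding module: let $u_1<\dots<u_m$ be the distinct indices of the next unseen packets of those receivers whose next unseen packet has arrived at the sender, and $R(u_i)$ the set of such receivers whose next unseen packet is $\mathbf{p}_{u_i}$. For $j=1,\dots,m$: for each $r\in R(u_j)$ let $\mathbf{y}_r=\sum_{i<j}\alpha_i\mathbf{W}_r(\mathbf{p}_{u_i})$, and choose $\alpha_j\in\mathbb{F}_q$ different from the coefficient of $\mathbf{p}_{u_j}$ in $\mathbf{y}_r$ for every $r\in R(u_j)$. Transmit $\mathbf{g}=\sum_{i=1}^m\alpha_i\mathbf{p}_{u_i}$ (nothing if the queue is empty). *)

(* Defs.v *)
(* Packets are indexed by 'I_N (N = a bound on the number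
   of arrivals considered, i.e. on the number of slots simulated); the k-th
   arriving packet p_k is the unit vector e_k of F^N, so the sender's knowledge
   space after A arrivals is span(e_0,...,e_{A-1}) ~ F^A. *)
From HB Require Import structures.
From mathcomp Require Import all_boot all_order all_algebra.
Set Implicit Arguments. Unset Strict Implicit. Unset Printing Implicit Defensive.
Import Order.TTheory GRing.Theory Num.Theory.
Local Open Scope ring_scope.

(* outcome of one slot: (packet arrival?, which receivers got the transmission) *)
Notation outcome n := (bool * {ffun 'I_n -> bool})%type.

Section Model.
Variables (F : finFieldType) (n N : nat).

Definition seenb (K : 'M[F]_N) (k : 'I_N) : bool :=
  [exists v : 'rV[F]_N, [&& (v <= K)%MS, v ord0 k == 1 &
     [forall i : 'I_N, (i < k)%N ==> (v ord0 i == 0)]]].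

Definition witness (K : 'M[F]_N) (k : 'I_N) : 'rV[F]_N :=
  odflt 0 [pick v : 'rV[F]_N | [&& (v <= K)%MS, v ord0 k == 1,
     [forall i : 'I_N, (i < k)%N ==> (v ord0 i == 0)] &
     [forall i : 'I_N, ((k < i)%N && seenb K i) ==> (v ord0 i == 0)]]].

(* index of the next unseen packet (lowest unseen index); N if none. *)
Definition next_unseen (K : 'M[F]_N) : nat :=
  \big[minn/N]_(k : 'I_N | ~~ seenb K k) (k : nat).

(* The coefficient choice: given the slot, the receivers' knowledge spaces,
   the number of arrivals, the coefficients alpha_1..alpha_{j-1} already
   chosen and the set of forbidden values, return alpha_j. *)
Definition chooser :=
  nat -> {ffun 'I_n -> 'M[F]_N} -> nat -> seq F -> {set F} -> F.

Definition coding (ch : chooser) (t : nat) (K : {ffun 'I_n -> 'M[F]_N})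
    (A : nat) : 'rV[F]_N :=
  let U := [seq k : 'I_N <- enum 'I_N |
             (k < A)%N && [exists r : 'I_n, next_unseen (K r) == val k]] in
  let step (acc : seq ('I_N * F)) (u : 'I_N) :=
    let y r := \sum_(p <- acc) p.2 *: witness (K r) p.1 in
    let S := [set (y r) ord0 u | r in [set r : 'I_n | next_unseen (K r) == val u]] in
    rcons acc (u, ch t K A (map snd acc) S) in
  let acc := foldl step [::] U in
  \sum_(p <- acc) p.2 *: (delta_mx ord0 p.1 : 'rV[F]_N).

Record state := State {
  nA : nat;
  queue : {set 'I_N};
  know : {ffun 'I_n -> 'M[F]_N} }.

Definition init_state : state := State 0 set0 [ffun _ => 0].

Definition step_slot (ch : chooser) (t : nat) (s : state) (o : outcome n) : state :=
  (* arrival just after the slot begins *)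
  let arrive := o.1 && (nA s < N)%N in
  let A' := if arrive then (nA s).+1 else nA s in
  let Q1 := if arrive then [set k : 'I_N | val k == nA s] :|: queue s
            else queue s in
  let g := if Q1 == set0 then None else Some (coding ch t (know s) A') in
  let K' := [ffun r => match g with
                       | Some v => if o.2 r then (know s r + v)%MS else know s r
                       | None => know s r end] in
  let Q' := [set k in Q1 | ~~ [forall r : 'I_n, seenb (K' r) k]] in
  State A' Q' K'.

Fixpoint run_from (ch : chooser) (t : nat) (s : state) (os : seq (outcome n))
    : state :=
  if os is o :: os' then run_from ch t.+1 (step_slot ch t s o) os' else s.

Definition run (ch : chooser) (os : seq (outcome n)) : state :=
  run_from ch 0 init_state os.

Definition phys_queue (s : state) : nat := #|queue s|.

(* dim(sender's knowledge space) - dim(receiver r's knowledge space) *)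
Definition virtual_queue (s : state) (r : 'I_n) : nat :=
  (nA s - \rank (know s r))%N.

End Model.

Section Prob.
Variables (R : realFieldType) (F : finFieldType) (n : nat).

Definition slot_prob (lam mu : R) (o : outcome n) : R :=
  (if o.1 then lam else 1 - lam) *
  \prod_(r : 'I_n) (if o.2 r then mu else 1 - mu).

Definition expected_phys_queue (lam mu : R) (ch : forall N : nat, chooser F n N)
    (T : nat) : R :=
  \sum_(w : {ffun 'I_T -> outcome n})
     (\prod_(i : 'I_T) slot_prob lam mu (w i)) *
     (phys_queue (run (ch T) [seq w i | i <- enum 'I_T]))%:R.

End Prob.

(* Main.v *)
Require Import Defs.
From HB Require Import structures.
From mathcomp Require Import all_boot all_order all_algebra zify ring lra.
Import Order.TTheory GRing.Theory Num.Theory.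
Set Implicit Arguments. Unset Strict Implicit. Unset Printing Implicit Defensive.
Local Open Scope ring_scope.

Section Lin.
Variables (F : finFieldType) (N : nat).
Implicit Types (K L : 'M[F]_N) (k : 'I_N).

Lemma seenbP K k : reflect (exists v : 'rV[F]_N, [/\ (v <= K)%MS, v ord0 k = 1 &
  forall i : 'I_N, (i < k)%N -> v ord0 i = 0]) (seenb K k).
Proof.
apply: (iffP existsP) => [[v /and3P[vK /eqP vk /forallP vi]]|[v [vK vk vi]]].
  by exists v; split => // i ik; apply/eqP; exact: (implyP (vi i) ik).
exists v; rewrite vK vk eqxx /=; apply/forallP => i; apply/implyP => ik.
by rewrite vi.
Qed.

Lemma seen_mono K L k : (K <= L)%MS -> seenb K k -> seenb L k.
Proof.
move=> KL /seenbP[v [vK vk vi]]; apply/seenbP; exists v; split => //.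
exact: submx_trans KL.
Qed.

Lemma witness_ex K k : seenb K k -> exists v : 'rV[F]_N,
  [/\ (v <= K)%MS, v ord0 k = 1, forall i : 'I_N, (i < k)%N -> v ord0 i = 0 &
      forall i : 'I_N, (k < i)%N -> seenb K i -> v ord0 i = 0].
Proof.
move=> sk.
suff: forall m, exists v : 'rV[F]_N,
  [/\ (v <= K)%MS, v ord0 k = 1, forall i : 'I_N, (i < k)%N -> v ord0 i = 0 &
      forall i : 'I_N, (k < i)%N -> (i < m)%N -> seenb K i -> v ord0 i = 0].
  move/(_ N) => [v [vK vk vlt vgt]]; exists v; split => // i ki si.
  exact: vgt.
elim => [|m [v [vK vk vlt vgt]]].
  have /seenbP[v [vK vk vi]] := sk; by exists v; split.
case Hm: (m < N)%N; last first.
  exists v; split => // i ki; rewrite ltnS leq_eqVlt => /orP[/eqP im|]; last exact: vgt.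
  by have := ltn_ord i; rewrite im Hm.
set mi := Ordinal Hm.
case Hc: ((k < m)%N && seenb K mi); last first.
  exists v; split => // i ki; rewrite ltnS leq_eqVlt => /orP[/eqP im|]; last exact: vgt.
  have -> : i = mi by apply: val_inj.
  by move=> smi; move: Hc; rewrite smi andbT -im ki.
case/andP: Hc => km /seenbP[w [wK wm wi]].
exists (v - v ord0 mi *: w); split.
- rewrite addmx_sub // -scaleNr scalemx_sub //.
- by rewrite !mxE (wi k km) vk mulr0 subr0.
- move=> i ik; have im : (i < mi)%N by exact: ltn_trans ik km.
  by rewrite !mxE (vlt i ik) (wi i im) mulr0 subr0.
- move=> i ki; rewrite ltnS leq_eqVlt => /orP[/eqP im|im] si.
    have -> : i = mi by apply: val_inj.
    by rewrite !mxE wm mulr1 subrr.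
  by rewrite !mxE (vgt i ki im si) (wi i im) mulr0 subr0.
Qed.

Lemma witness_sub K k : (witness K k <= K)%MS.
Proof.
rewrite /witness; case: pickP => [v /and4P[]|] //= _; exact: sub0mx.
Qed.

Lemma witness_props K k : seenb K k ->
  [/\ witness K k ord0 k = 1, forall i : 'I_N, (i < k)%N -> witness K k ord0 i = 0 &
      forall i : 'I_N, (k < i)%N -> seenb K i -> witness K k ord0 i = 0].
Proof.
move=> /witness_ex[v [vK vk vlt vgt]].
rewrite /witness; case: pickP => [w /and4P[_ /eqP wk /forallP wlt /forallP wgt]|H] /=.
  split => // i ik; first by apply/eqP; exact: (implyP (wlt i) ik).
  by move=> si; apply/eqP; apply: (implyP (wgt i)); rewrite ik si.
have := H v; rewrite vK vk eqxx /=.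
have -> : [forall i : 'I_N, (i < k)%N ==> (v ord0 i == 0)].
  by apply/forallP => i; apply/implyP => ik; rewrite vlt.
have -> // : [forall i : 'I_N, ((k < i)%N && seenb K i) ==> (v ord0 i == 0)].
by apply/forallP => i; apply/implyP => /andP[ki si]; rewrite vgt.
Qed.

Lemma bigmin_le (I : eqType) (r : seq I) (P : pred I) (f : I -> nat) m i0 :
  i0 \in r -> P i0 -> (\big[minn/m]_(i <- r | P i) f i <= f i0)%N.
Proof.
elim: r => // a r IH; rewrite inE big_cons => /orP[/eqP<- Pi|ir Pi].
  by rewrite Pi geq_minl.
case: (P a); last exact: IH.
exact: leq_trans (geq_minr _ _) (IH ir Pi).
Qed.

Lemma next_le K k : ~~ seenb K k -> (next_unseen K <= k)%N.
Proof. by move=> nk; rewrite /next_unseen; apply: bigmin_le; rewrite ?mem_index_enum. Qed.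

Lemma next_spec K : next_unseen K = N \/ exists k, ~~ seenb K k /\ next_unseen K = k.
Proof.
rewrite /next_unseen; apply: (big_ind (fun x => x = N \/ exists k, ~~ seenb K k /\ x = k)).
- by left.
- by move=> x y Hx Hy; rewrite /minn; case: ifP.
- by move=> k nk; right; exists k.
Qed.

Lemma seen_below K k : (k < next_unseen K)%N -> seenb K k.
Proof. by apply: contraTT => nk; rewrite -leqNgt next_le. Qed.

Lemma rank_le_seen K (A : nat) :
  (forall v : 'rV[F]_N, (v <= K)%MS -> forall i : 'I_N, (A <= i)%N -> v ord0 i = 0) ->
  (\rank K <= #|[set k : 'I_N | (k < A)%N && seenb K k]|)%N.
Proof.
move=> supp; set S := [set k : 'I_N | _].
pose C : 'M[F]_(N, #|S|) := \matrix_(i, j) (i == enum_val j)%:R.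
rewrite -(mxrank_mul_ker K C).
suff ->: \rank (K :&: kermx C)%MS = 0%N by rewrite addn0 rank_leq_col.
apply/eqP; rewrite mxrank_eq0; apply/rowV0P => v.
rewrite sub_capmx => /andP[vK /sub_kermxP vC].
have vS : forall s, s \in S -> v ord0 s = 0.
  move=> s sS; have := congr1 (fun M : 'M[F]_(1, #|S|) => M ord0 (enum_rank_in sS s)) vC.
  rewrite !mxE (bigD1 s) //= mxE enum_rankK_in // eqxx mulr1 big1 ?addr0 //.
  by move=> i /negbTE ne; rewrite mxE enum_rankK_in // ne mulr0.
apply/rowP => i; rewrite mxE; apply/eqP/negPn/negP => Hi.
case: (@arg_minnP _ i (fun j : 'I_N => v ord0 j != 0) (fun i : 'I_N => (i : nat)) Hi) => k vk kmin.
have kA : (k < A)%N.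
  by rewrite ltnNge; apply/negP => Ak; move: vk; rewrite (supp v vK k Ak) eqxx.
have : k \in S.
  rewrite inE kA /=; apply/seenbP; exists ((v ord0 k)^-1 *: v); split.
  - exact: scalemx_sub.
  - by rewrite mxE mulVf.
  - move=> j jk; rewrite mxE; case: (eqVneq (v ord0 j) 0) => [->|nj]; first by rewrite mulr0.
    by have := kmin j nj; rewrite leqNgt jk.
by move/vS; move/eqP: vk.
Qed.

End Lin.


Section Coding.
Variables (F : finFieldType) (n N : nat) (ch : chooser F n N).
Hypothesis Hch : forall (t : nat) (K : {ffun 'I_n -> 'M[F]_N}) (A : nat)
           (prev : seq F) (S : {set F}),
           (#|S| < #|F|)%N -> ch t K A prev S \notin S.
Hypothesis Hq : (n <= #|F|)%N.

Definition yv (K : {ffun 'I_n -> 'M[F]_N}) (acc : seq ('I_N * F)) r :=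
  \sum_(p <- acc) p.2 *: witness (K r) p.1.
Definition Sset K acc (u : 'I_N) :=
  [set (yv K acc r) ord0 u | r in [set r : 'I_n | next_unseen (K r) == val u]].
Definition cstep t K A acc u :=
  rcons acc (u, ch t K A (map snd acc) (Sset K acc u)).
Definition Ul (K : {ffun 'I_n -> 'M[F]_N}) A := [seq k : 'I_N <- enum 'I_N |
             (k < A)%N && [exists r : 'I_n, next_unseen (K r) == val k]].

Lemma codingE t K A : coding ch t K A =
  \sum_(p <- foldl (cstep t K A) [::] (Ul K A)) p.2 *: (delta_mx ord0 p.1 : 'rV[F]_N).
Proof. by []. Qed.

Lemma foldl_ext t K A acc l : exists tl,
  foldl (cstep t K A) acc l = acc ++ tl /\ map fst tl = l.
Proof.
elim: l acc => [|u l IH] acc /=; first by exists [::]; rewrite cats0.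
have [tl [-> <-]] := IH (cstep t K A acc u).
by exists ((u, ch t K A (map snd acc) (Sset K acc u)) :: tl); rewrite /cstep cat_rcons.
Qed.

Lemma sorted_last_rel (T : Type) (e : rel T) (s : seq T) x :
  transitive e -> sorted e (rcons s x) -> all (e^~ x) s.
Proof.
move=> tr; elim: s => //= a s IH H.
have := order_path_min tr H; rewrite all_rcons => /andP[-> _] /=.
by apply: IH; exact: path_sorted H.
Qed.

Lemma Ul_sorted K A : sorted (fun x y : 'I_N => (x < y)%N) (Ul K A).
Proof.
apply: sorted_filter; first by move=> x y z; apply: ltn_trans.
have := iota_ltn_sorted 0 N; rewrite -val_enum_ord sorted_map; exact.
Qed.

Lemma mem_Ul K A (k : 'I_N) :
  (k \in Ul K A) = (k < A)%N && [exists r : 'I_n, next_unseen (K r) == val k].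
Proof. by rewrite mem_filter mem_enum andbT. Qed.

Lemma card_F : (1 < #|F|)%N.
Proof.
have := max_card (mem [set (0 : F); 1]); rewrite cards2.
by rewrite eq_sym oner_eq0.
Qed.

Lemma coding_sub t K A : forall i : 'I_N, (A <= i)%N -> coding ch t K A ord0 i = 0.
Proof.
move=> i Ai; rewrite codingE.
have [tl [-> fs]] := foldl_ext t K A [::] (Ul K A).
rewrite summxE big1_seq // => p /andP[_ pin].
have : p.1 \in Ul K A by rewrite -fs; apply: map_f.
rewrite mem_Ul => /andP[pA _]; rewrite !mxE.
case: (eqVneq p.1 i) => [e|]; last by rewrite andbF mulr0.
by move: pA; rewrite e ltnNge Ai.
Qed.

Lemma coding_seen t (K : {ffun 'I_n -> 'M[F]_N}) A (r : 'I_n) (u : 'I_N) : next_unseen (K r) = u ->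
  (u < A)%N -> seenb (K r + coding ch t K A)%MS u.
Proof.
move=> nu uA.
have uU : u \in Ul K A by rewrite mem_Ul uA; apply/existsP; exists r; rewrite nu.
have [U1 [U2 EU]] : exists U1 U2, Ul K A = U1 ++ u :: U2.
  by case/splitPr: uU => U1 U2; exists U1, U2.
have srt := Ul_sorted K A; rewrite EU in srt.
have tr : transitive (fun x y : 'I_N => (x < y)%N) by move=> y x z; apply: ltn_trans.
have U1lt : forall x, x \in U1 -> (x < u)%N.
  move: srt; rewrite sorted_cat_cons => /andP[s1 _].
  by have /allP H := sorted_last_rel tr s1; move=> x /H.
have U2gt : forall x, x \in U2 -> (u < x)%N.
  move: srt; rewrite sorted_cat_cons => /andP[_ s2].
  by have /allP H := order_path_min tr s2; move=> x /H.
set acc1 := foldl (cstep t K A) [::] U1.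
set al := ch t K A (map snd acc1) (Sset K acc1 u).
have [tl [Hacc fs]] := foldl_ext t K A (rcons acc1 (u, al)) U2.
have fs1 : map fst acc1 = U1.
  by have [tl1 [e1 f1]] := foldl_ext t K A [::] U1; rewrite /acc1 e1.
have E : foldl (cstep t K A) [::] (Ul K A) = acc1 ++ (u, al) :: tl.
  by rewrite EU foldl_cat /= -/acc1 Hacc cat_rcons.
have in1 : forall p, p \in acc1 -> (p.1 < u)%N.
  by move=> p pin; apply: U1lt; rewrite -fs1; apply: map_f.
have yK : (yv K acc1 r <= K r)%MS.
  by apply: summx_sub => p _; apply: scalemx_sub; exact: witness_sub.
set g := coding ch t K A.
set y := yv K acc1 r.
set v := g - y.
have vsub : (v <= K r + g)%MS.
  rewrite addmx_sub ?addsmxSr // -scaleN1r scalemx_sub //.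
  exact: submx_trans yK (addsmxSl _ _).
have gk : forall k : 'I_N, (k <= u)%N ->
    g ord0 k = \sum_(p <- acc1) p.2 * (p.1 == k)%:R + al * (u == k)%:R.
  move=> k ku; rewrite /g codingE E big_cat big_cons /= !mxE !summxE.
  rewrite [X in _ + (_ + X)]big1_seq ?addr0.
    by congr (_ + _); [apply: eq_bigr => p _; rewrite !mxE|]; rewrite eqxx eq_sym.
  move=> p /andP[_ pin]; rewrite mxE.
  have : p.1 \in U2 by rewrite -fs; apply: map_f.
  move/U2gt => up; case: (eqVneq p.1 k) => [e|ne]; last by rewrite !mxE eq_sym (negbTE ne) andbF mulr0.
  by move: up; rewrite e ltnNge ku.
have yk : forall k, y ord0 k = \sum_(p <- acc1) p.2 * witness (K r) p.1 ord0 k.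
  by move=> k; rewrite /y /yv summxE; apply: eq_bigr => p _; rewrite mxE.
have wk : forall (p : 'I_N * F) (k : 'I_N), p \in acc1 -> (k < u)%N ->
    witness (K r) p.1 ord0 k = (p.1 == k)%:R.
  move=> p k pin ku; have pu := in1 p pin.
  have sp : seenb (K r) p.1 by apply: seen_below; rewrite nu.
  have [w1 wlt wgt] := witness_props sp.
  case: (ltngtP k p.1) => [kp|pk|e].
  - have ne : p.1 != k by apply/eqP => e; move: kp; rewrite e ltnn.
    by rewrite wlt // (negbTE ne).
  - have ne : p.1 != k by apply/eqP => e; move: pk; rewrite e ltnn.
    by rewrite wgt // ?(negbTE ne) //; apply: seen_below; rewrite nu.
  - have e2 : k = p.1 by apply: val_inj.
    by rewrite e2 w1 eqxx.
have v_lt : forall k : 'I_N, (k < u)%N -> v ord0 k = 0.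
  move=> k ku; rewrite /v !mxE gk ?(ltnW ku) // yk.
  have -> : (u == k) = false by apply/eqP => e; move: ku; rewrite e ltnn.
  rewrite mulr0 addr0; apply/eqP; rewrite subr_eq0; apply/eqP/eq_big_seq => p pin.
  by rewrite wk.
have v_u : v ord0 u = al - y ord0 u.
  rewrite /v !mxE gk // eqxx mulr1 big1_seq ?add0r // => p /andP[_ pin].
  have pu := in1 p pin; have ne : p.1 != u by apply/eqP => e; move: pu; rewrite e ltnn.
  by rewrite (negbTE ne) mulr0.
have cardS : (#|Sset K acc1 u| < #|F|)%N.
  case E1: U1 => [|x U1'].
    have Hnil : acc1 = [::] by apply/nilP; rewrite /nilp -(size_map fst) fs1 E1.
    rewrite Hnil; apply: leq_ltn_trans card_F; rewrite -(cards1 (0 : F)).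
    apply: subset_leq_card; apply/subsetP => z /imsetP[r' _ ->].
    by rewrite /yv big_nil mxE inE.
  have : x \in Ul K A by rewrite EU E1 mem_cat inE eqxx.
  rewrite mem_Ul => /andP[_ /existsP[r1 /eqP Hr1]].
  have xu : (x < u)%N by apply: U1lt; rewrite E1 inE eqxx.
  apply: leq_ltn_trans (leq_imset_card _ _) _.
  have sub : [set r0 : 'I_n | next_unseen (K r0) == u] \subset [set~ r1].
    apply/subsetP => r'; rewrite !inE => /eqP e; apply/eqP => er.
    by move: xu; rewrite -Hr1 -er e ltnn.
  apply: leq_ltn_trans (subset_leq_card sub) _.
  have n0 : (0 < n)%N := leq_ltn_trans (leq0n r) (ltn_ord r).
  by rewrite cardsC1 card_ord; apply: leq_trans Hq; rewrite prednK.
have yS : y ord0 u \in Sset K acc1 u.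
  by apply/imsetP; exists r => //; rewrite inE nu.
have al_notin := Hch t K A (map snd acc1) cardS.
have vu0 : v ord0 u != 0.
  by rewrite v_u subr_eq0; apply/eqP => e; move: al_notin; rewrite -/al e yS.
apply/seenbP; exists ((v ord0 u)^-1 *: v); split.
- exact: scalemx_sub.
- by rewrite mxE mulVf.
- by move=> i iu; rewrite mxE (v_lt i iu) mulr0.
Qed.

End Coding.


Lemma card_bigcup_le (I T : finType) (B : I -> {set T}) :
  (#|\bigcup_i B i| <= \sum_i #|B i|)%N.
Proof.
elim/big_rec2: _ => [|i x y _ H]; first by rewrite cards0.
rewrite cardsU; apply: leq_trans (leq_subr _ _) _; by rewrite leq_add2l.
Qed.

Lemma card_setU_le (T : finType) (A B : {set T}) : (#|A :|: B| <= #|A| + #|B|)%N.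
Proof. by rewrite cardsU leq_subr. Qed.

Lemma card_lt_le (N m : nat) : (#|[set k : 'I_N | (k < m)%N]| <= m)%N.
Proof.
rewrite cardE -(size_map val) -[X in (_ <= X)%N](size_iota 0).
apply: uniq_leq_size; first by rewrite map_inj_uniq ?enum_uniq //; exact: val_inj.
by move=> x /mapP[k]; rewrite mem_enum inE mem_iota => km ->.
Qed.

Definition wstep n (r : 'I_n) (x : nat) (o : outcome n) : nat := ((x + o.1) - o.2 r)%N.

Lemma foldl_wstep_mono n (r : 'I_n) os x y : (x <= y)%N ->
  (foldl (wstep r) x os <= foldl (wstep r) y os)%N.
Proof.
elim: os x y => //= o os IH x y xy; apply: IH.
by rewrite /wstep leq_sub2r // leq_add2r.
Qed.

Section Dyn.
Variables (F : finFieldType) (n N : nat) (ch : chooser F n N).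
Hypothesis Hch : forall (t : nat) (K : {ffun 'I_n -> 'M[F]_N}) (A : nat)
           (prev : seq F) (S : {set F}),
           (#|S| < #|F|)%N -> ch t K A prev S \notin S.
Hypothesis Hq : (n <= #|F|)%N.

Definition Zset (s : state F n N) (r : 'I_n) :=
  [set k : 'I_N | (k < nA s)%N && ~~ seenb (know s r) k].

Definition Inv (s : state F n N) : Prop := [/\ (nA s <= N)%N,
  forall k, k \in queue s -> (k < nA s)%N && [exists r, ~~ seenb (know s r) k],
  forall k : 'I_N, (k < nA s)%N -> [exists r, ~~ seenb (know s r) k] -> k \in queue s &
  forall r (v : 'rV[F]_N), (v <= know s r)%MS -> forall i : 'I_N, (nA s <= i)%N -> v ord0 i = 0].

Definition arr (s : state F n N) (o : outcome n) := o.1 && (nA s < N)%N.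
Definition A1 s o := if arr s o then (nA s).+1 else nA s.
Definition Q1 s o := if arr s o then [set k : 'I_N | val k == nA s] :|: queue s
                     else queue s.

Lemma nA_step t s o : nA (step_slot ch t s o) = A1 s o.
Proof. by []. Qed.

Lemma know_step t s o r : know (step_slot ch t s o) r =
  if Q1 s o == set0 then know s r
  else if o.2 r then (know s r + coding ch t (know s) (A1 s o))%MS else know s r.
Proof. by rewrite /step_slot /= ffunE; case: ifP. Qed.

Lemma queue_step t s o : queue (step_slot ch t s o) =
  [set k in Q1 s o | ~~ [forall r, seenb (know (step_slot ch t s o) r) k]].
Proof. by []. Qed.

Lemma know_mono t s o r : (know s r <= know (step_slot ch t s o) r)%MS.
Proof.
rewrite know_step; case: ifP => _; first exact: submx_refl.
case: ifP => _; [exact: addsmxSl | exact: submx_refl].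
Qed.

Lemma unseen_step t s o r k : ~~ seenb (know (step_slot ch t s o) r) k ->
  ~~ seenb (know s r) k.
Proof. by apply: contra; apply: seen_mono; apply: know_mono. Qed.

Lemma mem_Q1 s o k : (k \in Q1 s o) = (arr s o && (val k == nA s)) || (k \in queue s).
Proof. by rewrite /Q1; case: (arr s o); rewrite ?inE. Qed.

Lemma A1E s o : A1 s o = (nA s + arr s o)%N.
Proof. by rewrite /A1; case: (arr s o); rewrite ?addn1 ?addn0. Qed.

Lemma Inv_init : Inv (init_state F n N).
Proof.
split => //=; first by move=> k; rewrite inE.
move=> r v; rewrite ffunE submx0 => /eqP -> i _; by rewrite mxE.
Qed.

Lemma Inv_step t s o : Inv s -> Inv (step_slot ch t s o).
Proof.
case=> [HN H2 H3 H4]; split; rewrite ?nA_step.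
- by rewrite /A1 /arr; case: o => a f /=; case: a => //=; case: ifP.
- move=> k; rewrite queue_step inE negb_forall => /andP[kQ ->]; rewrite andbT.
  move: kQ; rewrite mem_Q1 A1E => /orP[/andP[-> /eqP ->]|/H2/andP[kn _]].
    by rewrite addn1.
  exact: leq_trans kn (leq_addr _ _).
- move=> k kA /existsP[r nr]; rewrite queue_step inE negb_forall.
  apply/andP; split; last by apply/existsP; exists r.
  rewrite mem_Q1; case: (ltnP k (nA s)) => kn.
    by rewrite H3 ?orbT //; apply/existsP; exists r; apply: unseen_step nr.
  move: kA; rewrite A1E; case: (arr s o) => /=; last by rewrite addn0 ltnNge kn.
  by rewrite addn1 ltnS => kn'; rewrite eqn_leq kn kn'.
- move=> r v; rewrite know_step A1E => + i Ai.
  have Ai' : (nA s <= i)%N by apply: leq_trans Ai; rewrite leq_addr.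
  case: ifP => _; first by move=> vK; exact: H4 vK i Ai'.
  case: ifP => _; last by move=> vK; exact: H4 vK i Ai'.
  case/sub_addsmxP => [[u1 u2] /= ->].
  rewrite mxE (H4 r (u1 *m know s r) (submxMl _ _) i Ai') add0r mxE big_ord1.
  by rewrite (coding_sub ch t (know s) (A:=(nA s + arr s o)%N)) ?mulr0 // -A1E.
Qed.

Lemma Z_step t s o r : Inv s ->
  (#|Zset (step_slot ch t s o) r| <= wstep r #|Zset s r| o)%N.
Proof.
case=> [HN H2 H3 H4].
set X := [set k : 'I_N | (k < A1 s o)%N && ~~ seenb (know s r) k].
have YX : Zset (step_slot ch t s o) r \subset X.
  apply/subsetP => k; rewrite !inE nA_step => /andP[-> /unseen_step -> //].
have Xle : (#|X| <= #|Zset s r| + arr s o)%N.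
  case Ha: (arr s o); last first.
    by rewrite addn0; apply: subset_leq_card; apply/subsetP => k; rewrite !inE A1E Ha addn0.
  have Hlt : (nA s < N)%N by move: Ha; rewrite /arr => /andP[].
  have : X \subset Zset s r :|: [set Ordinal Hlt].
    apply/subsetP => k; rewrite !inE A1E Ha addn1 ltnS leq_eqVlt.
    case/andP => /orP[/eqP e|kl] ->; last by rewrite kl.
    by rewrite orbC; apply/orP; left; apply/eqP; apply: val_inj.
  move/subset_leq_card => H; apply: leq_trans H _.
  by apply: leq_trans (card_setU_le _ _) _; rewrite cards1.
have arr_le : (arr s o <= o.1)%N by rewrite /arr; case: (o.1); rewrite ?leq_b1.
rewrite /wstep; case Hb: (o.2 r); last first.
  rewrite subn0; apply: leq_trans (subset_leq_card YX) _.
  apply: leq_trans Xle _; by rewrite leq_add2l.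
case: (set_0Vmem X) => [X0|[k kX]].
  by move: (subset_leq_card YX); rewrite X0 cards0 leqn0 => /eqP ->.
move: (kX); rewrite inE => /andP[kA nk].
have [nN|[u [nu unx]]] := next_spec (know s r).
  by have := next_le nk; rewrite nN leqNgt ltn_ord.
have uk : (u <= k)%N by rewrite -unx next_le.
have uA : (u < A1 s o)%N by apply: leq_ltn_trans uk kA.
have uX : u \in X by rewrite inE uA nu.
have Qne : (Q1 s o == set0) = false.
  apply/negbTE/set0Pn; exists u; rewrite mem_Q1; case: (ltnP u (nA s)) => un.
    by rewrite H3 ?orbT //; apply/existsP; exists r.
  move: uA; rewrite A1E; case: (arr s o) => /=; last by rewrite addn0 ltnNge un.
  by rewrite addn1 ltnS => un'; rewrite eqn_leq un un'.
have seen' : seenb (know (step_slot ch t s o) r) u.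
  rewrite know_step Qne Hb; exact: (@coding_seen _ _ _ ch Hch Hq t (know s) (A1 s o) r u unx uA).
have YXu : Zset (step_slot ch t s o) r \subset X :\ u.
  apply/subsetP => j jY; rewrite in_setD1 (subsetP YX j jY) andbT.
  apply/eqP => e; move: jY; rewrite e inE seen'; by rewrite andbF.
apply: leq_trans (subset_leq_card YXu) _.
have := cardsD1 u X; rewrite uX => HX.
lia.
Qed.

Lemma run_bound r os : forall t s, Inv s ->
  Inv (run_from ch t s os) /\
  (#|Zset (run_from ch t s os) r| <= foldl (wstep r) #|Zset s r| os)%N.
Proof.
elim: os => [|o os IH] t s Is /=; first by split.
have [I' Z'] := IH t.+1 _ (Inv_step t o Is); split => //.
apply: leq_trans Z' _; apply: foldl_wstep_mono; exact: Z_step.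
Qed.

Lemma run_Inv os : forall t s, Inv s -> Inv (run_from ch t s os).
Proof.
elim: os => [|o os IH] t s Is //=; apply: IH; exact: Inv_step.
Qed.

Lemma phys_le s : Inv s -> (phys_queue s <= \sum_r #|Zset s r|)%N.
Proof.
case=> [_ H2 _ _]; apply: leq_trans (card_bigcup_le (fun r => Zset s r)).
apply: subset_leq_card; apply/subsetP => k /H2 /andP[kn /existsP[r nr]].
by apply/bigcupP; exists r => //; rewrite inE kn.
Qed.

Lemma Z_le_virtual s r : Inv s -> (#|Zset s r| <= virtual_queue s r)%N.
Proof.
case=> [_ _ _ H4]; rewrite /virtual_queue.
have Hr := rank_le_seen (H4 r).
have := cardsID [set k : 'I_N | seenb (know s r) k] [set k : 'I_N | (k < nA s)%N].
have -> : [set k : 'I_N | (k < nA s)%N] :&: [set k | seenb (know s r) k] =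
          [set k : 'I_N | (k < nA s)%N && seenb (know s r) k].
  by apply/setP => k; rewrite !inE.
have -> : [set k : 'I_N | (k < nA s)%N] :\: [set k | seenb (know s r) k] = Zset s r.
  by apply/setP => k; rewrite !inE andbC.
have := card_lt_le N (nA s).
lia.
Qed.

Lemma part1 os : (phys_queue (run ch os) <= \sum_(r < n) virtual_queue (run ch os) r)%N.
Proof.
have Is : Inv (run ch os) := run_Inv os 0 Inv_init.
apply: leq_trans (phys_le Is) _; apply: leq_sum => r _; exact: Z_le_virtual.
Qed.

Lemma phys_le_W os : (phys_queue (run ch os) <= \sum_(r < n) foldl (wstep r) 0 os)%N.
Proof.
have Is : Inv (run ch os) := run_Inv os 0 Inv_init.
apply: leq_trans (phys_le Is) _; apply: leq_sum => r _.
have [_ H] := run_bound r os 0 Inv_init.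
apply: leq_trans H _; apply: foldl_wstep_mono.
by rewrite /Zset /= leqn0 cards_eq0; apply/eqP/setP => k; rewrite !inE.
Qed.

End Dyn.


Section Prob.
Variables (R : realFieldType) (n : nat) (lam mu : R).
Hypotheses (l0 : 0 <= lam) (l1 : lam <= 1) (m0 : 0 <= mu) (m1 : mu <= 1).

Notation X := (outcome n).
Notation p := (@slot_prob R n lam mu).

Definition EE (T : nat) (f : seq X -> R) : R :=
  \sum_(w : {ffun 'I_T -> X}) (\prod_(i : 'I_T) p (w i)) * f [seq w i | i <- enum 'I_T].

Lemma p_ge0 o : 0 <= p o.
Proof.
rewrite /slot_prob mulr_ge0 //; first by case: (o.1); rewrite ?subr_ge0.
by apply: prodr_ge0 => r _; case: (o.2 r); rewrite ?subr_ge0.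
Qed.

Definition hT T (q : {ffun 'I_T -> X} * X) : {ffun 'I_T.+1 -> X} :=
  [ffun i => if unlift ord_max i is Some j then q.1 j else q.2].
Definition hTinv T (w : {ffun 'I_T.+1 -> X}) : {ffun 'I_T -> X} * X :=
  ([ffun j => w (widen_ord (leqnSn T) j)], w ord_max).

Lemma widen_lift T (j : 'I_T) : widen_ord (leqnSn T) j = lift ord_max j.
Proof. by apply: val_inj; rewrite [RHS]lift_max. Qed.

Lemma hT_widen T q (j : 'I_T) : hT q (widen_ord (leqnSn T) j) = q.1 j.
Proof. by rewrite /hT ffunE widen_lift liftK. Qed.

Lemma hT_max T q : hT (T:=T) q ord_max = q.2.
Proof. by rewrite /hT ffunE unlift_none. Qed.

Lemma hT_bij T : bijective (@hT T).
Proof.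
exists (@hTinv T).
  case=> w o; rewrite /hTinv hT_max; congr (_, _).
  by apply/ffunP => j; rewrite ffunE hT_widen.
move=> w; apply/ffunP => i; rewrite /hT ffunE.
case: unliftP => [j ->|->] /=; last by [].
by rewrite ffunE widen_lift.
Qed.

Lemma EE_rec T f : EE T.+1 f =
  EE T (fun s => \sum_(o : X) p o * f (rcons s o)).
Proof.
rewrite /EE (reindex (@hT T)); last exact: onW_bij (hT_bij T).
rewrite -(pair_bigA _ (fun w o => (\prod_(i < T.+1) p (hT (w, o) i)) *
   f [seq hT (w, o) i | i <- enum 'I_T.+1])) /=.
apply: eq_bigr => w _; rewrite mulr_sumr; apply: eq_bigr => o _.
rewrite big_ord_recr /= hT_max enum_ordSr map_rcons hT_max -map_comp.
rewrite (eq_bigr (fun i => p (w i))); last by move=> i _; rewrite hT_widen.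
rewrite (eq_map (g := fun i => w i)); last by move=> i /=; rewrite hT_widen.
by rewrite mulrA [_ * p o]mulrC.
Qed.

Lemma EE0 f : EE 0 f = f [::].
Proof.
rewrite /EE (eq_bigr (fun _ => f [::])); last first.
  by move=> w _; rewrite big_ord0 mul1r; congr f; apply: size0nil; rewrite size_map size_enum_ord.
by rewrite sumr_const card_ffun card_ord expn0.
Qed.

Lemma EE_le T f g : (forall s, size s = T -> f s <= g s) -> EE T f <= EE T g.
Proof.
move=> H; apply: ler_sum => w _; apply: ler_wpM2l.
  by apply: prodr_ge0 => i _; exact: p_ge0.
by apply: H; rewrite size_map size_enum_ord.
Qed.

Lemma EE_lin T a b f g : EE T (fun s => a * f s + b * g s) = a * EE T f + b * EE T g.
Proof.
rewrite /EE !mulr_sumr -big_split; apply: eq_bigr => w _ /=; ring.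
Qed.

Lemma EE_sum T m (f : 'I_m -> seq X -> R) :
  EE T (fun s => \sum_(i < m) f i s) = \sum_(i < m) EE T (f i).
Proof.
rewrite /EE exchange_big; apply: eq_bigr => w _; rewrite mulr_sumr //.
Qed.

Definition Pb (a : bool) := if a then lam else 1 - lam.
Definition Qb (b : bool) := if b then mu else 1 - mu.

Lemma marg_ffun (r : 'I_n) (h : bool -> R) :
  \sum_(f : {ffun 'I_n -> bool}) (\prod_(r' < n) Qb (f r')) * h (f r) =
  \sum_(b : bool) Qb b * h b.
Proof.
pose G (i : 'I_n) (b : bool) := Qb b * (if i == r then h b else 1).
transitivity (\sum_(f : {ffun 'I_n -> bool}) \prod_i G i (f i)).
  apply: eq_bigr => f _; rewrite /G big_split /=; congr (_ * _).
  rewrite (bigD1 r) //= eqxx big1 ?mulr1 // => i /negbTE ->; by [].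
rewrite -bigA_distr_bigA (bigD1 r) //= [X in _ * X]big1 ?mulr1.
  by apply: eq_bigr => b _; rewrite /G eqxx.
move=> i /negbTE ir; rewrite big_bool /G ir /Qb /=; ring.
Qed.

Lemma marg (r : 'I_n) (H : bool -> bool -> R) :
  \sum_(o : X) p o * H o.1 (o.2 r) = \sum_(a : bool) \sum_(b : bool) Pb a * Qb b * H a b.
Proof.
rewrite -(pair_bigA _ (fun a f => p (a, f) * H a (f r))) /=.
apply: eq_bigr => a _.
rewrite (eq_bigr (fun f : {ffun 'I_n -> bool} => Pb a * ((\prod_(r' < n) Qb (f r')) * H a (f r)))); last first.
  by move=> f _; rewrite /slot_prob mulrA.
rewrite -mulr_sumr marg_ffun mulr_sumr; apply: eq_bigr => b _; ring.
Qed.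

Lemma sum_p : \sum_(o : X) p o = 1.
Proof.
rewrite -(pair_bigA _ (fun a f => p (a, f))) /= big_bool /slot_prob /=.
rewrite -!mulr_sumr.
have -> : \sum_(f : {ffun 'I_n -> bool}) \prod_r (if f r then mu else 1 - mu) = 1.
  rewrite -(bigA_distr_bigA (fun (i : 'I_n) (b : bool) => if b then mu else 1 - mu)).
  by rewrite big1 // => i _; rewrite big_bool /=; ring.
ring.
Qed.

Lemma EE_ext T f g : (forall s, f s = g s) -> EE T f = EE T g.
Proof. by move=> H; apply: eq_bigr => w _; rewrite H. Qed.

Lemma EE_lin3 T a b c f g h :
  EE T (fun s => a * f s + b * g s + c * h s) = a * EE T f + b * EE T g + c * EE T h.
Proof. rewrite /EE !mulr_sumr -!big_split; apply: eq_bigr => w _ /=; ring. Qed.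

Lemma EE1 T : EE T (fun _ => 1) = 1.
Proof.
elim: T => [|T IH]; first by rewrite EE0.
rewrite EE_rec (EE_ext _ (g := fun _ => 1)) ?IH // => s.
by rewrite (eq_bigr p) ?sum_p // => o _; rewrite mulr1.
Qed.

Definition W (r : 'I_n) (s : seq X) := foldl (wstep r) 0%N s.
Definition G T r j := EE T (fun s => ((j <= W r s)%N)%:R).

Definition aa := lam * mu + (1 - lam) * (1 - mu).
Definition uu := lam * (1 - mu).
Definition dd := (1 - lam) * mu.

Lemma step_ind (r : 'I_n) (j x : nat) :
  \sum_(o : X) p o * ((j <= wstep r x o)%N)%:R =
  aa * ((j <= x)%N)%:R + uu * ((j <= x.+1)%N)%:R + dd * ((j <= x.-1)%N)%:R.
Proof.
rewrite (marg r (fun a b => ((j <= (x + a) - b)%N)%:R)) !big_bool /= /Pb /Qb.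
rewrite ?addn1 ?addn0 ?subn1 ?subn0 /= /aa /uu /dd; ring.
Qed.

Lemma G_rec T r j : G T.+1 r j.+1 = aa * G T r j.+1 + uu * G T r j + dd * G T r j.+2.
Proof.
rewrite /G EE_rec -EE_lin3; apply: EE_ext => s.
rewrite (eq_bigr (fun o => p o * ((j.+1 <= wstep r (W r s) o)%N)%:R)); last first.
  by move=> o _; rewrite /W foldl_rcons.
rewrite step_ind ltnS; congr (_ + _ * _); case: (W r s) => //= x.
Qed.

Lemma G0 T r : G T r 0 = 1.
Proof. by rewrite /G (EE_ext _ (g := fun _ => 1)) ?EE1. Qed.

Lemma W_le r s : (W r s <= size s)%N.
Proof.
rewrite /W; suff: forall x, (foldl (wstep r) x s <= x + size s)%N by move/(_ 0%N).
elim: s => [|o s IH] x /=; first by rewrite addn0.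
apply: leq_trans (IH _) _; rewrite addnS -addSn leq_add2r /wstep.
by apply: leq_trans (leq_subr _ _) _; case: (o.1); rewrite ?addn1 ?addn0.
Qed.

Lemma sum_ind (x T : nat) : (x <= T)%N -> \sum_(k < T) ((k < x)%N)%:R = x%:R :> R.
Proof.
elim: T x => [|T IH] x; first by rewrite leqn0 => /eqP ->; rewrite big_ord0.
rewrite leq_eqVlt => /orP[/eqP ->|]; last first.
  by rewrite ltnS => xT; rewrite big_ord_recr /= IH // ltnNge xT /= addr0.
rewrite (eq_bigr (fun _ => 1)) ?sumr_const ?card_ord //.
by move=> k _; rewrite ltn_ord.
Qed.

Definition rr := uu / dd.

Lemma G_bound (Hd : 0 < dd) T r j : G T r j <= rr ^+ j.
Proof.
have u0 : 0 <= uu by rewrite /uu mulr_ge0 ?subr_ge0.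
have rr0 : 0 <= rr by rewrite /rr divr_ge0 // ltW.
have drr : dd * rr = uu by rewrite /rr mulrC divfK // gt_eqF.
have a0 : 0 <= aa by rewrite /aa addr_ge0 // mulr_ge0 ?subr_ge0.
have d0 : 0 <= dd by exact: ltW.
elim: T j => [|T IH] j.
  rewrite /G EE0 /W /=; case: j => [|j]; first by rewrite expr0.
  rewrite /=; exact: exprn_ge0.
case: j => [|j]; first by rewrite G0 expr0.
rewrite G_rec.
apply: (@le_trans _ _ (aa * rr ^+ j.+1 + uu * rr ^+ j + dd * rr ^+ j.+2)).
  apply: lerD; [apply: lerD|]; apply: ler_wpM2l => //; exact: IH.
set z := rr ^+ j; rewrite !exprS -/z.
have e1 : dd * (rr * (rr * z)) = uu * (rr * z) by rewrite -drr; ring.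
have e2 : uu * z = dd * (rr * z) by rewrite -drr; ring.
rewrite e1 e2.
have -> : aa * (rr * z) + dd * (rr * z) + uu * (rr * z) = rr * z.
  rewrite /aa /uu /dd; ring.
by [].
Qed.

Lemma geom (Hr : rr != 1) T : \sum_(k < T) rr ^+ k.+1 = (rr - rr ^+ T.+1) / (1 - rr).
Proof.
have H1 : 1 - rr != 0 by rewrite subr_eq0 eq_sym.
elim: T => [|T IH]; first by rewrite big_ord0 expr1 subrr mul0r.
rewrite big_ord_recr /= IH; apply: (mulIf H1); rewrite mulrDl !divfK //.
rewrite !exprS; ring.
Qed.

Lemma EW_bound (Hd : 0 < dd) (Hr : rr < 1) T r :
  EE T (fun s => (W r s)%:R) <= rr / (1 - rr).
Proof.
have u0 : 0 <= uu by rewrite /uu mulr_ge0 ?subr_ge0.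
have rr0 : 0 <= rr by rewrite /rr divr_ge0 // ltW.
apply: (@le_trans _ _ (EE T (fun s => \sum_(k < T) ((k.+1 <= W r s)%N)%:R))).
  apply: EE_le => s sT; rewrite sum_ind //; rewrite -sT; exact: W_le.
rewrite EE_sum; apply: (@le_trans _ _ (\sum_(k < T) rr ^+ k.+1)).
  by apply: ler_sum => k _; exact: G_bound.
rewrite geom ?lt_eqF //; apply: ler_wpM2r.
  by rewrite invr_ge0 subr_ge0 ltW.
by rewrite gerBl exprn_ge0.
Qed.

End Prob.




Lemma final_bound (R : realFieldType) (F : finFieldType) (n : nat)
  (ch : forall N : nat, chooser F n N)
  (Hch : forall (N t : nat) (K : {ffun 'I_n -> 'M[F]_N}) (A : nat)
           (prev : seq F) (S : {set F}),
           (#|S| < #|F|)%N -> ch N t K A prev S \notin S)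
  (Hq : (n <= #|F|)%N) (lam mu : R) :
  0 < lam -> lam < mu -> mu < 1 -> forall T,
  expected_phys_queue lam mu ch T <= n%:R / (1 - lam / mu).
Proof.
move=> l0 lm m1 T.
have l0' : 0 <= lam by exact: ltW.
have l1 : lam <= 1 by lra.
have m0 : 0 <= mu by lra.
have m1' : mu <= 1 by lra.
have Hd : 0 < dd lam mu by rewrite /dd mulr_gt0 // ?subr_gt0; lra.
have Hud : uu lam mu < dd lam mu by rewrite /uu /dd; nra.
have Hr : rr lam mu < 1 by rewrite /rr ltr_pdivrMr // mul1r.
rewrite (_ : expected_phys_queue lam mu ch T =
   EE lam mu T (fun s => (phys_queue (run (ch T) s))%:R)) //.
apply: (@le_trans _ _ (EE lam mu T (fun s => \sum_(r < n) (W r s)%:R))).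
  apply: EE_le => // s _; rewrite -natr_sum ler_nat; exact: phys_le_W (Hch T) Hq s.
rewrite EE_sum.
apply: (@le_trans _ _ (\sum_(r < n) (rr lam mu / (1 - rr lam mu)))).
  by apply: ler_sum => r _; exact: EW_bound.
rewrite sumr_const card_ord -[X in X <= _]mulr_natl; apply: ler_wpM2l; first exact: ler0n.
have mlam : mu - lam != 0 by rewrite subr_eq0 gt_eqF.
have d0 : dd lam mu != 0 by rewrite gt_eqF.
have mu0 : mu != 0 by rewrite gt_eqF //; lra.
have E : dd lam mu - uu lam mu = mu - lam.
  by rewrite /dd /uu; ring.
have e1 : rr lam mu / (1 - rr lam mu) = uu lam mu / (mu - lam).
  by rewrite /rr -E; field; rewrite E mlam d0.
have e2 : (1 - lam / mu)^-1 = mu / (mu - lam) by field; rewrite mlam mu0.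
rewrite e1 e2 ler_wpM2r ?invr_ge0 ?subr_ge0 ?ltW // /uu; nra.
Qed.


Unset Implicit Arguments.

Theorem theorem6 (F : finFieldType) (n : nat) (R : realFieldType)
  (ch : forall N : nat, chooser F n N)
  (Hch : forall (N t : nat) (K : {ffun 'I_n -> 'M[F]_N}) (A : nat)
           (prev : seq F) (S : {set F}),
           (#|S| < #|F|)%N -> ch N t K A prev S \notin S)
  (Hq : (n <= #|F|)%N) :
  (forall (N : nat) (os : seq (outcome n)), (size os <= N)%N ->
     (phys_queue (run (ch N) os) <=
        \sum_(r < n) virtual_queue (run (ch N) os) r)%N)
  /\
  (forall mu : R, 0 < mu < 1 ->
     exists C delta : R, 0 < delta /\
       forall lam : R, 0 < lam -> lam < mu -> 1 - delta < lam / mu ->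
         exists T0 : nat, forall T : nat, (T0 <= T)%N ->
           expected_phys_queue lam mu ch T <= C / (1 - lam / mu))
  /\
  (forall lam : R, 0 < lam < 1 ->
     exists C delta : R, 0 < delta /\
       forall mu : R, lam < mu -> mu < 1 -> 1 - delta < lam / mu ->
         exists T0 : nat, forall T : nat, (T0 <= T)%N ->
           expected_phys_queue lam mu ch T <= C / (1 - lam / mu)).

Proof.
split; first by move=> N os _; exact: (@part1 F n N (ch N) Hq os).
split.
- move=> mu /andP[m0 m1]; exists n%:R, 1; split; first exact: ltr01.
  move=> lam l0 lm _; exists 0%N => T _; exact: final_bound.
- move=> lam /andP[l0 l1]; exists n%:R, 1; split; first exact: ltr01.
  move=> mu lm m1 _; exists 0%N => T _; exact: final_bound.
Qed.
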